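(* If $n\ge1$, $m>0$ and $(n,m)\neq(1,1)$, then $|A_{n,m}|=4n$.
   Context: The Yoke graph $Y_{n,m}$ has vertices the tuples $v=(v_0,\dots,v_{m+1})$ with $v_0,v_{m+1}\in\mathbb{Z}_n$, $v_1,\dots,v_m\in\{0,1\}$, $\sum v_i\equiv0\pmod n$; $u\sim v$ iff there is $0\le i\le m$ with $u_j=v_j$ for $j\notin\{i,i+1\}$ and either ($u_i=v_i+1$, $u_{i+1}=v_{i+1}-1$) or ($u_i=v_i-1$, $u_{i+1}=v_{i+1}+1$), buckets mod $n$. Define automorphisms (bucket entries mod $n$): $\varphi(v_0,v_1,\dots,v_m,v_{m+1})=(v_0+1,v_1,\dots,v_m,v_{m+1}-1)$; $\psi(v_0,\dots,v_{m+1})=(v_{m+1},v_m,\dots,v_1,v_0)$; $\tau(v_0,v_1,\dots,v_m,v_{m+1})=(-v_0,1-v_1,\dots,1-v_m,-(m+v_{m+1}))$. $A_{n,m}$ is the subgroup of $\operatorname{Aut}(Y_{n,m})$ generated by $\varphi,\psi,\tau$. *)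

(* Defs.v *)
From mathcomp Require Import all_boot all_order all_fingroup all_algebra.
Set Implicit Arguments. Unset Strict Implicit. Unset Printing Implicit Defensive.
Import GRing.Theory.
Local Open Scope ring_scope.

(* Buckets live in Z_n, represented by 'I_(n.-1).+1, which is exactly 'I_n
   (the integers mod n with its additive group structure from zmodp) whenever
   n >= 1, the only case considered. *)
Definition bucket (n : nat) := 'I_(n.-1).+1.

Definition zn (n : nat) (k : nat) : bucket n := Zp1 *+ k.

(* Vertices of the Yoke graph Y_{n,m}: (v_0, (v_1..v_m), v_{m+1}) with
   v_0, v_{m+1} in Z_n, v_i in {0,1} (booleans), and sum v_i = 0 in Z_n. *)
Definition raw n m := (bucket n * m.-tuple bool * bucket n)%type.
Definition vtx_ok n m (x : raw n m) : bool :=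
  x.1.1 + zn n (count id x.1.2) + x.2 == 0.
Definition Vtx n m := {x : raw n m | vtx_ok x}.

Definition coord n m (v : Vtx n m) (i : nat) : int :=
  if i == 0%N then Posz (val v).1.1
  else if i == m.+1 then Posz (val v).2
  else Posz (nth false (val v).1.2 i.-1).

Definition ceq n m (i : nat) (a b : int) : bool :=
  if (i == 0%N) || (i == m.+1) then (a == b %[mod Posz n])%Z else a == b.

(* Adjacency of Y_{n,m}: u ~ v iff for some 0 <= i <= m, u_j = v_j for j not in
   {i, i+1} and (u_i, u_{i+1}) = (v_i + 1, v_{i+1} - 1) or (v_i - 1, v_{i+1} + 1),
   buckets mod n.  (Only for documentation: A_{n,m} below is the group
   generated by phi, psi, tau, which lies in Aut(Y_{n,m}) <= Sym(V).) *)
Definition yoke_adj n m (u v : Vtx n m) : bool :=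
  [exists i : 'I_m.+1,
     [forall j : 'I_m.+2, (j != i :> nat) && (j != i.+1 :> nat) ==>
         ceq n m j (coord u j) (coord v j)] &&
     ((ceq n m i (coord u i) (coord v i + 1) &&
       ceq n m i.+1 (coord u i.+1) (coord v i.+1 - 1)) ||
      (ceq n m i (coord u i) (coord v i - 1) &&
       ceq n m i.+1 (coord u i.+1) (coord v i.+1 + 1)))].

Section Maps.
Variables n m : nat.
Implicit Types x : raw n m.

Definition phi_raw x : raw n m := (x.1.1 + zn n 1, x.1.2, x.2 - zn n 1).
Definition phiinv_raw x : raw n m := (x.1.1 - zn n 1, x.1.2, x.2 + zn n 1).
Definition psi_raw x : raw n m := (x.2, [tuple of rev x.1.2], x.1.1).
Definition tau_raw x : raw n m :=
  (- x.1.1, map_tuple negb x.1.2, - (zn n m + x.2)).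

Lemma phi_ok x : vtx_ok x -> vtx_ok (phi_raw x).
Proof.
case: x => [[a s] b]; rewrite /vtx_ok /= => /eqP H.
by rewrite [a + _ + _]addrAC addrACA subrr addr0 H.
Qed.

Lemma phiinv_ok x : vtx_ok x -> vtx_ok (phiinv_raw x).
Proof.
case: x => [[a s] b]; rewrite /vtx_ok /= => /eqP H.
by rewrite [a + _ + _]addrAC addrACA addNr addr0 H.
Qed.

Lemma psi_ok x : vtx_ok x -> vtx_ok (psi_raw x).
Proof.
case: x => [[a s] b]; rewrite /vtx_ok /= count_rev => /eqP H.
by rewrite addrC [b + _]addrC addrA H.
Qed.

Lemma tau_ok x : vtx_ok x -> vtx_ok (tau_raw x).
Proof.
case: x => [[a s] b]; rewrite /vtx_ok /= => /eqP H.
have -> : count id (map negb (tval s)) = (m - count id s)%N.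
  rewrite count_map -[X in (X - _)%N](size_tuple s) -(count_predC id s) addKn.
  by apply: eq_count => c.
have cm : (count id s <= m)%N by rewrite -{2}(size_tuple s) count_size.
rewrite /zn mulrnBr // -/(zn n m) -/(zn n (count id s)).
by rewrite opprD addrA [- a + _]addrCA [_ - zn n m]addrAC subrr add0r -!opprD H oppr0.
Qed.

Definition phiV (v : Vtx n m) : Vtx n m := Sub (phi_raw (val v)) (phi_ok (valP v)).
Definition phiinvV (v : Vtx n m) : Vtx n m :=
  Sub (phiinv_raw (val v)) (phiinv_ok (valP v)).
Definition psiV (v : Vtx n m) : Vtx n m := Sub (psi_raw (val v)) (psi_ok (valP v)).
Definition tauV (v : Vtx n m) : Vtx n m := Sub (tau_raw (val v)) (tau_ok (valP v)).

Lemma phiVK : cancel phiV phiinvV.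
Proof.
case=> [[[a s] b] h]; apply: val_inj => /=.
by rewrite /phiinv_raw /phi_raw /= addrK subrK.
Qed.

Lemma psiVK : involutive psiV.
Proof.
case=> [[[a s] b] h]; apply: val_inj => /=.
rewrite /psi_raw /=; congr (_, _, _); apply: val_inj => /=; exact: revK.
Qed.

Lemma tauVK : involutive tauV.
Proof.
case=> [[[a s] b] h]; apply: val_inj => /=.
rewrite /tau_raw /= opprK opprD opprK addKr; congr (_, _, _).
by apply: val_inj => /=; rewrite -map_comp map_id_in // => c _ /=; rewrite negbK.
Qed.

Definition phi : {perm Vtx n m} := perm (can_inj phiVK).
Definition psi : {perm Vtx n m} := perm (inv_inj psiVK).
Definition tau : {perm Vtx n m} := perm (inv_inj tauVK).

End Maps.

Definition A_group n m : {group {perm Vtx n m}} :=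
  <<[set phi n m; psi n m; tau n m]>>%G.

(* Main.v *)
Require Import Defs.
From mathcomp Require Import all_boot all_order all_fingroup all_algebra.
From mathcomp Require Import zify.
Set Implicit Arguments. Unset Strict Implicit. Unset Printing Implicit Defensive.
Import GRing.Theory.
Local Open Scope ring_scope.

Section S.
Local Open Scope ring_scope.

Lemma val_zn n k : (0 < n)%N -> val (zn n k) = (k %% n)%N.
Proof.
case: n => // N _. rewrite /zn Zp_mulrn /= modnMml mul1n //.
Qed.

Lemma zn_n n : (0 < n)%N -> zn n n = 0.
Proof. move=> h; apply/val_inj; rewrite val_zn // modnn. by case: n h. Qed.

Lemma zn_add n a b : zn n (a + b) = zn n a + zn n b.
Proof. by rewrite /zn mulrnDr. Qed.

Lemma phiE n m v : val (phi n m v) = phi_raw (val v).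
Proof. by rewrite permE. Qed.
Lemma psiE n m v : val (psi n m v) = psi_raw (val v).
Proof. by rewrite permE. Qed.
Lemma tauE n m v : val (tau n m v) = tau_raw (val v).
Proof. by rewrite permE. Qed.

Lemma expE n m k v : val (((phi n m) ^+ k)%g v) =
   ((val v).1.1 + zn n k, (val v).1.2, (val v).2 - zn n k).
Proof.
elim: k => [|k IH].
  rewrite expg0 perm1 /zn !mulr0n addr0 subr0. by case: (val v) => [[]].
rewrite expgSr permM phiE IH /phi_raw /= /zn.
by rewrite mulr1n [Zp1 *+ k.+1]mulrSr addrA opprD addrA.
Qed.

Lemma rel_ps n m : (phi n m * psi n m * phi n m = psi n m)%g.
Proof.
apply/permP => v; apply/val_inj; rewrite !permM !phiE !psiE phiE.
case: (val v) => [[a x] b] /=; rewrite /phi_raw /psi_raw /=.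
by rewrite subrK addrK.
Qed.

Lemma rel_pt n m : (phi n m * tau n m * phi n m = tau n m)%g.
Proof.
apply/permP => v; apply/val_inj; rewrite !permM !phiE !tauE phiE.
case: (val v) => [[a x] b] /=; rewrite /phi_raw /tau_raw /=.
by rewrite opprD subrK addrA opprD opprK addrK.
Qed.

Lemma rel_ts n m : (tau n m * psi n m * phi n m ^+ m = psi n m * tau n m)%g.
Proof.
apply/permP => v; apply/val_inj; rewrite !permM expE !psiE !tauE !psiE.
case: (val v) => [[a x] b] /=; rewrite /psi_raw /tau_raw /=.
congr (_, _, _).
- by rewrite opprD addrAC addNr add0r.
- by apply/val_inj; rewrite /= map_rev.
- by rewrite opprD addrC.
Qed.

Lemma phi_n n m : (0 < n)%N -> (phi n m ^+ n = 1)%g.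
Proof.
move=> hn; apply/permP => v; apply/val_inj; rewrite expE zn_n // addr0 subr0 perm1.
by case: (val v) => [[]].
Qed.

Lemma psi2 n m : (psi n m * psi n m = 1)%g.
Proof. by apply/permP => v; apply/val_inj; rewrite permM perm1 !psiE /psi_raw /=; case: (val v) => [[a x] b] /=; congr (_,_,_); apply/val_inj; rewrite /= revK. Qed.
Lemma tau2 n m : (tau n m * tau n m = 1)%g.
Proof.
apply/permP => v; apply/val_inj; rewrite permM perm1 !tauE /tau_raw /=.
case: (val v) => [[a x] b] /=; congr (_,_,_).
- by rewrite opprK.
- by apply/val_inj; rewrite /= -map_comp map_id_in // => c _ /=; rewrite negbK.
- by rewrite opprD opprK addKr.
Qed.
End S.

Section G.
Local Open Scope group_scope.
Variables (gT : finGroupType) (p s t : gT) (d c : nat).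
Hypotheses (hpd : p ^+ d.+1 = 1) (hs2 : s * s = 1) (ht2 : t * t = 1)
  (hsp : s * p = p ^+ d * s) (hsq : s * p ^+ d = p * s)
  (htp : t * p = p ^+ d * t) (htq : t * p ^+ d = p * t)
  (hts : t * s = s * t * p ^+ (d * c)).

Lemma comm_gen (x a b : gT) j : x * a = b * x -> x * a ^+ j = b ^+ j * x.
Proof.
move=> h; elim: j => [|j IH]; first by rewrite !expg0 mulg1 mul1g.
by rewrite expgSr mulgA IH -mulgA h mulgA -expgSr.
Qed.

Definition NF k (e1 e2 : bool) := p ^+ k * s ^+ e1 * t ^+ e2.
Definition isNF x := exists k e1 e2, x = NF k e1 e2.

Ltac nf := rewrite /NF ?expg1 ?expg0 ?mulg1 ?mul1g.

Lemma NF_p k e1 e2 : isNF (NF k e1 e2 * p).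
Proof.
rewrite /NF; case: e1; case: e2; rewrite ?expg1 ?expg0 ?mulg1.
- exists k.+1, true, true; nf. by rewrite -!mulgA htp (mulgA s) hsq !mulgA expgSr.
- exists (k + d), true, false; nf. by rewrite -mulgA hsp mulgA expgD.
- exists (k + d), false, true; nf. by rewrite -mulgA htp mulgA expgD.
- exists k.+1, false, false; nf. by rewrite expgSr.
Qed.

Lemma NF_s k e1 e2 : isNF (NF k e1 e2 * s).
Proof.
rewrite /NF; case: e1; case: e2; rewrite ?expg1 ?expg0 ?mulg1.
- exists (k + c), false, true; nf. rewrite -!mulgA hts -!mulgA (mulgA s s) hs2 mul1g.
  by rewrite expgM (comm_gen _ htq) mulgA expgD.
- exists k, false, false; nf. by rewrite -mulgA hs2 mulg1.
- exists (k + d * c), true, true; nf. rewrite -mulgA hts !mulgA.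
  by rewrite -!mulgA expgM (comm_gen _ htq) (mulgA s) (comm_gen _ hsp) -expgM !mulgA expgD.
- by exists k, true, false; nf.
Qed.

Lemma NF_t k e1 e2 : isNF (NF k e1 e2 * t).
Proof.
rewrite /NF; case: e2; rewrite ?expg1 ?expg0 ?mulg1.
- by exists k, e1, false; nf; rewrite -mulgA ht2 mulg1.
- by exists k, e1, true; nf.
Qed.

Lemma gen_NF x : x \in <<[set p; s; t]>> -> isNF x.
Proof.
case/gen_prodgP => N [f Hf ->].
elim: N f Hf => [|N IH] f Hf.
  by rewrite big_ord0; exists 0%N, false, false; nf.
rewrite big_ord_recr /=.
have [k [e1 [e2 ->]]] := IH (fun i => f (widen_ord (leqnSn N) i)) (fun i => Hf _).
have := Hf ord_max; rewrite !inE -orbA => /or3P [] /eqP ->.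
- exact: NF_p.
- exact: NF_s.
- exact: NF_t.
Qed.
End G.

Lemma NFE n m k (e1 e2 : bool) v :
  val (NF (phi n m) (psi n m) (tau n m) k e1 e2 v) =
  let y := ((val v).1.1 + zn n k, (val v).1.2, (val v).2 - zn n k) in
  let y' := if e1 then psi_raw y else y in if e2 then tau_raw y' else y'.
Proof.
rewrite /NF !permM; case: e1; case: e2;
  rewrite /= ?expg1 ?expg0 ?perm1 ?tauE ?psiE expE //.
Qed.

Lemma NF1 n m k (e1 e2 : bool) v :
  (val (NF (phi n m) (psi n m) (tau n m) k e1 e2 v)).1.1 =
  (if e2 then -%R else id) (if e1 then (val v).2 - zn n k else (val v).1.1 + zn n k).
Proof. by rewrite NFE; case: e1; case: e2. Qed.

Lemma NF2 n m k (e1 e2 : bool) v :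
  tval (val (NF (phi n m) (psi n m) (tau n m) k e1 e2 v)).1.2 =
  (if e2 then map negb else id) ((if e1 then rev else id) (tval (val v).1.2)).
Proof. by rewrite NFE; case: e1; case: e2. Qed.

Lemma count_NF (e1 e2 : bool) (x : seq bool) :
  count id ((if e2 then map negb else id) ((if e1 then rev else id) x)) =
  if e2 then (size x - count id x)%N else count id x.
Proof.
have h : count id (map negb x) = (size x - count id x)%N.
  by rewrite count_map -(count_predC id x) addKn; apply: eq_count.
have h' : count id (map negb (rev x)) = (size x - count id x)%N.
  by rewrite map_rev count_rev.
by case: e1; case: e2; rewrite /= ?count_rev.
Qed.

Lemma pd_inv (gT : finGroupType) (p : gT) d : (p ^+ d.+1 = 1 -> p ^+ d = p^-1)%g.
Proof. by move=> h; apply: (mulIg p); rewrite mulVg -expgSr h. Qed.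

Section Main.
Local Open Scope ring_scope.
Lemma main_card n m : (1 <= n)%N -> (0 < m)%N -> (n, m) <> (1%N, 1%N) ->
  #|A_group n m| = (4 * n)%N.
Proof.
move=> hn hm hnm.
case: n hn hnm => // N hn hnm.
set p := phi N.+1 m; set s := psi N.+1 m; set t := tau N.+1 m.
have rps : (p * s * p = s)%g := rel_ps N.+1 m.
have rpt : (p * t * p = t)%g := rel_pt N.+1 m.
have rts : (t * s * p ^+ m = s * t)%g := rel_ts N.+1 m.
have hpd : (p ^+ N.+1 = 1)%g by exact: phi_n.
have pinv := pd_inv hpd.
have hsp : (s * p = p ^+ N * s)%g.
  by rewrite pinv -{2}rps !mulgA mulVg mul1g.
have hsq : (s * p ^+ N = p * s)%g by rewrite pinv -{1}rps mulgK.
have htp : (t * p = p ^+ N * t)%g.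
  by rewrite pinv -{2}rpt !mulgA mulVg mul1g.
have htq : (t * p ^+ N = p * t)%g by rewrite pinv -{1}rpt mulgK.
have hts : (t * s = s * t * p ^+ (N * m))%g.
  by rewrite expgM pinv expgVn -rts mulgK.
pose F (x : 'I_N.+1 * bool * bool) := NF p s t x.1.1 x.1.2 x.2.
have -> : A_group N.+1 m = F @: setT :> {set _}.
  apply/eqP; rewrite eqEsubset; apply/andP; split; apply/subsetP => x.
    move=> /(gen_NF (psi2 N.+1 m) (tau2 N.+1 m) hsp hsq htp htq hts) [k [e1 [e2 ->]]].
    apply/imsetP; exists (Ordinal (ltn_pmod k hn), e1, e2) => //.
    by rewrite /F /NF /= (expg_mod _ (phi_n m hn)).
  case/imsetP => [[[k e1] e2]] _ ->; rewrite /F /NF /=.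
  have hg : forall g, g \in [set p; s; t] -> g \in A_group N.+1 m.
    by move=> g hg; apply: mem_gen.
  by rewrite !groupM ?groupX ?hg // !inE eqxx ?orbT.
rewrite card_imset; last first.
  move=> [[k e1] e2] [[k' e1'] e2'] /= /permP H.
  have Hv : forall v, val (F (k, e1, e2) v) = val (F (k', e1', e2') v).
    by move=> v; rewrite H.
  have ok0 : vtx_ok ((0, nseq_tuple m false, 0) : raw N.+1 m).
    by rewrite /vtx_ok /= count_nseq mul0n /zn mulr0n !addr0.
  pose v0 : Vtx N.+1 m := Sub _ ok0.
  have sz1 : size (true :: nseq m.-1 false) == m by rewrite /= size_nseq prednK.
  pose x1 : m.-tuple bool := Tuple sz1.
  have ok1 : vtx_ok ((0, x1, - zn N.+1 1) : raw N.+1 m).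
    by rewrite /vtx_ok /= count_nseq mul0n add0r addn0 subrr.
  pose v1 : Vtx N.+1 m := Sub _ ok1.
  have E2 : e2 = e2'.
    have := congr1 (fun y : raw _ _ => count id (tval y.1.2)) (Hv v0).
    rewrite /F /= !NF2 !count_NF /= size_nseq count_nseq mul0n subn0.
    by case: (e2); case: (e2') => //= h; lia.
  subst e2'.
  have E0 := congr1 (fun y : raw _ _ => y.1.1) (Hv v0).
  have E1 := congr1 (fun y : raw _ _ => y.1.1) (Hv v1).
  have B1 := congr1 (fun y : raw _ _ => tval y.1.2) (Hv v1).
  rewrite /F /= !NF1 in E0 E1; rewrite /F /= !NF2 in B1.
  have {E0 E1} [E0 E1] : ((if e1 then 0 - zn N.+1 k else 0 + zn N.+1 k) =
      (if e1' then 0 - zn N.+1 k' else 0 + zn N.+1 k')) /\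
      ((if e1 then - zn N.+1 1 - zn N.+1 k else 0 + zn N.+1 k) =
      (if e1' then - zn N.+1 1 - zn N.+1 k' else 0 + zn N.+1 k')).
    by case: (e2) E0 E1 => /= E0 E1; split => //; apply: oppr_inj.
  have {B1} B1 : (if e1 then rev else id) (tval x1) = (if e1' then rev else id) (tval x1).
    case: (e2) B1 => /= B1; last exact: B1.
    exact: (inj_map (inv_inj negbK) B1).
  have kk : forall (a b : 'I_N.+1), zn N.+1 a = zn N.+1 b -> a = b.
    move=> a b /(congr1 val); rewrite !val_zn // !modn_small //.
    exact: val_inj.
  have revx : N = 0%N -> rev x1 <> x1 :> seq bool.
    move=> N0 E.
    have m2 : m <> 1%N by move=> h; apply: hnm; rewrite N0 h.
    have em : m.-1 = (m.-2).+1 by lia.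
    have := congr1 (fun l => nth false l 0) E.
    rewrite /= nth_rev /= size_nseq // subSS subn0 em /=.
    have nf : forall M, nth false (false :: nseq M false) M = false.
      by elim.
    by rewrite nf.
  have zN : zn N.+1 1 = 0 -> N = 0%N.
    move/(congr1 val); rewrite val_zn //=.
    by case: (N) => // N'; rewrite modn_small.
  move: E0 E1 B1; case: (e1); case: (e1') => /= E0 E1 B1.
  - by move: E0; rewrite !sub0r => /oppr_inj /kk ->.
  - rewrite -E0 in E1; move/addIr: E1 => /eqP; rewrite oppr_eq0 => /eqP /zN.
    by move/revx => h; exfalso; apply: h; first [exact: B1 | exact: (esym B1)].
  - rewrite E0 in E1; move/addIr: E1 => /esym /eqP; rewrite oppr_eq0 => /eqP /zN.
    by move/revx => h; exfalso; apply: h; first [exact: B1 | exact: (esym B1)].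
  - by move: E0; rewrite !add0r => /kk ->.
rewrite cardsT !card_prod card_ord card_bool; lia.
Qed.
End Main.

Theorem lemma6p11 (n m : nat) :
  (1 <= n)%N -> (0 < m)%N -> (n, m) <> (1%N, 1%N) ->
  #|A_group n m| = (4 * n)%N.
Proof. exact: main_card. Qed.
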